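(* A set of pairwise disjoint convex polygons in $\mathbb{R}^2$ cannot always be reconstructed from a set of markers containing at least one marker per edge: there exist two distinct finite sets $S\neq S'$ of pairwise disjoint convex polygons and a finite set $\mathcal{M}$ of point-normal markers such that both $S$ and $S'$ are fully consistent with $\mathcal{M}$.
   Context: A point-normal marker in the plane is a pair $(p,n)$ with $p\in\mathbb{R}^2$ and $n$ a unit vector. A marker $(p,n)$ is on and aligned with an edge $e$ of a polygon $Q$ if $p\in e$ and $n$ is the outward unit normal of $Q$ along $e$. A set of polygons is consistent with a set of markers if every marker is on and aligned with an edge of one of the polygons; it is fully consistent if moreover every edge of every polygon in the set has at least one marker on and aligned with it. *)

(* Defs.v *)
From Stdlib Require Import Reals Lra List.
Import ListNotations.
Open Scope R_scope.

Definition point : Type := (R * R)%type.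

(* Orientation (twice the signed area) of the triangle a b c. *)
Definition orient (a b c : point) : R :=
  (fst b - fst a) * (snd c - snd a) - (snd b - snd a) * (fst c - fst a).

(* A convex polygon is given by its list of vertices in counterclockwise
   order, with at least 3 vertices, strictly convex: every vertex not on the
   directed edge v_i -> v_{i+1} lies strictly to its left. *)
Definition vtx (vs : list point) (i : nat) : point := nth i vs (0, 0).
Definition nxt (vs : list point) (i : nat) : nat := Nat.modulo (S i) (length vs).

Definition convex_polygon (vs : list point) : Prop :=
  (3 <= length vs)%nat /\
  forall i j, (i < length vs)%nat -> (j < length vs)%nat ->
    j <> i -> j <> nxt vs i ->
    0 < orient (vtx vs i) (vtx vs (nxt vs i)) (vtx vs j).

Definition in_polygon (vs : list point) (p : point) : Prop :=
  forall i, (i < length vs)%nat -> 0 <= orient (vtx vs i) (vtx vs (nxt vs i)) p.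

Definition on_segment (a b p : point) : Prop :=
  exists t, 0 <= t <= 1 /\
    p = ((1 - t) * fst a + t * fst b, (1 - t) * snd a + t * snd b).

(* Outward unit normal of the directed edge a -> b of a counterclockwise
   polygon (interior on the left). *)
Definition outward_normal (a b : point) : point :=
  let dx := fst b - fst a in
  let dy := snd b - snd a in
  let L := sqrt (dx * dx + dy * dy) in
  (dy / L, - dx / L).

Definition unit_vector (n : point) : Prop := fst n * fst n + snd n * snd n = 1.

(* A point-normal marker (p, n). *)
Definition marker : Type := (point * point)%type.

Definition on_aligned_edge (m : marker) (vs : list point) (i : nat) : Prop :=
  (i < length vs)%nat /\
  on_segment (vtx vs i) (vtx vs (nxt vs i)) (fst m) /\
  snd m = outward_normal (vtx vs i) (vtx vs (nxt vs i)).

Definition same_polygon (P Q : list point) : Prop :=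
  forall p, in_polygon P p <-> in_polygon Q p.

(* Finite set of pairwise disjoint convex polygons (represented by a list;
   two members are either the same polygon or have disjoint regions). *)
Definition disjoint_convex_family (S : list (list point)) : Prop :=
  (forall P, In P S -> convex_polygon P) /\
  (forall P Q, In P S -> In Q S ->
     (exists p, in_polygon P p /\ in_polygon Q p) -> same_polygon P Q).

Definition same_family (S S' : list (list point)) : Prop :=
  (forall P, In P S -> exists Q, In Q S' /\ same_polygon P Q) /\
  (forall Q, In Q S' -> exists P, In P S /\ same_polygon P Q).

Definition consistent (S : list (list point)) (M : list marker) : Prop :=
  forall m, In m M -> exists P i, In P S /\ on_aligned_edge m P i.

Definition fully_consistent (S : list (list point)) (M : list marker) : Prop :=
  consistent S M /\
  (forall P i, In P S -> (i < length P)%nat ->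
     exists m, In m M /\ on_aligned_edge m P i).

(* Main.v *)
Require Import Defs.
From Stdlib Require Import Reals Lra Lia List.
Import ListNotations.
Open Scope R_scope.

Lemma in_poly3 (a b c p : point) :
  0 <= orient a b p -> 0 <= orient b c p -> 0 <= orient c a p -> in_polygon [a;b;c] p.
Proof.
  intros H1 H2 H3 i Hi; simpl in Hi.
  destruct i as [|[|[|i]]]; [exact H1|exact H2|exact H3|lia].
Qed.

Lemma in_poly3_inv (a b c p : point) : in_polygon [a;b;c] p ->
  0 <= orient a b p /\ 0 <= orient b c p /\ 0 <= orient c a p.
Proof.
  intros H; repeat split;
  [apply (H 0%nat) | apply (H 1%nat) | apply (H 2%nat)]; simpl; lia.
Qed.

Lemma convex3 (a b c : point) :
  0 < orient a b c -> 0 < orient b c a -> 0 < orient c a b -> convex_polygon [a;b;c].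
Proof.
  intros H1 H2 H3; split; [simpl; lia|].
  intros i j Hi Hj H4 H5; simpl in Hi, Hj.
  destruct i as [|[|[|i]]]; destruct j as [|[|[|j]]]; simpl in *;
  try lia; try assumption; exfalso; apply H5; reflexivity.
Qed.

Lemma aligned3_0 (a b c : point) (m : marker) :
  on_segment a b (fst m) -> snd m = outward_normal a b -> on_aligned_edge m [a;b;c] 0.
Proof. intros; split; [simpl; lia| split; assumption]. Qed.
Lemma aligned3_1 (a b c : point) (m : marker) :
  on_segment b c (fst m) -> snd m = outward_normal b c -> on_aligned_edge m [a;b;c] 1.
Proof. intros; split; [simpl; lia| split; assumption]. Qed.
Lemma aligned3_2 (a b c : point) (m : marker) :
  on_segment c a (fst m) -> snd m = outward_normal c a -> on_aligned_edge m [a;b;c] 2.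
Proof. intros; split; [simpl; lia| split; assumption]. Qed.

Lemma on_seg_intro (a b p : point) (t : R) : 0 <= t <= 1 ->
  fst p = (1 - t) * fst a + t * fst b -> snd p = (1 - t) * snd a + t * snd b ->
  on_segment a b p.
Proof.
  intros Ht H1 H2; exists t; split; [exact Ht|]. destruct p; simpl in *; subst; reflexivity.
Qed.

Lemma normal_scale (a b c d : point) (k : R) : 0 < k ->
  fst d - fst c = k * (fst b - fst a) -> snd d - snd c = k * (snd b - snd a) ->
  0 < (fst b - fst a) * (fst b - fst a) + (snd b - snd a) * (snd b - snd a) ->
  outward_normal c d = outward_normal a b.
Proof.
  intros Hk H1 H2 Hp. unfold outward_normal. rewrite H1, H2.
  set (dx := fst b - fst a) in *. set (dy := snd b - snd a) in *.
  replace (k * dx * (k * dx) + k * dy * (k * dy)) with ((k*k) * (dx*dx+dy*dy)) by ring.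
  rewrite sqrt_mult_alt by nra. rewrite sqrt_square by lra.
  assert (0 < sqrt (dx*dx+dy*dy)) by (apply sqrt_lt_R0; lra).
  f_equal; field; lra.
Qed.

Lemma unit_normal (a b : point) :
  0 < (fst b - fst a) * (fst b - fst a) + (snd b - snd a) * (snd b - snd a) ->
  unit_vector (outward_normal a b).
Proof.
  intros Hp. unfold unit_vector, outward_normal; simpl.
  set (dx := fst b - fst a) in *. set (dy := snd b - snd a) in *.
  assert (Hs : sqrt (dx*dx+dy*dy) * sqrt (dx*dx+dy*dy) = dx*dx+dy*dy) by (apply sqrt_sqrt; lra).
  assert (0 < sqrt (dx*dx+dy*dy)) by (apply sqrt_lt_R0; lra).
  field_simplify; [| lra]. rewrite <- ?Rsqr_pow2. unfold Rsqr. rewrite Hs. field. lra.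
Qed.

Definition A0 : list point := [((-440), (400)); ((-340), (250)); ((60), (150))].
Definition A1 : list point := [((-120), (-560)); ((-60), (-420)); ((-196), (124))].
Definition A2 : list point := [((560), (160)); ((400), (160)); ((0), (-240))].
Definition B0 : list point := [((-440), (400)); ((-160), (-20)); ((-240), (300))].
Definition B1 : list point := [((-120), (-560)); ((30), (-210)); ((-140), (-380))].
Definition B2 : list point := [((560), (160)); ((20), (160)); ((420), (60))].
Definition m0 : marker := (((-390), (325)), outward_normal ((-440), (400)) ((-340), (250))).
Definition m1 : marker := (((40), (155)), outward_normal ((-340), (250)) ((60), (150))).
Definition m2 : marker := (((-340), (350)), outward_normal ((60), (150)) ((-440), (400))).
Definition m3 : marker := (((-90), (-490)), outward_normal ((-120), (-560)) ((-60), (-420))).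
Definition m4 : marker := (((-178), (52)), outward_normal ((-60), (-420)) ((-196), (124))).
Definition m5 : marker := (((-130), (-470)), outward_normal ((-196), (124)) ((-120), (-560))).
Definition m6 : marker := (((480), (160)), outward_normal ((560), (160)) ((400), (160))).
Definition m7 : marker := (((15), (-225)), outward_normal ((400), (160)) ((0), (-240))).
Definition m8 : marker := (((490), (110)), outward_normal ((0), (-240)) ((560), (160))).
Definition M : list marker := [m0; m1; m2; m3; m4; m5; m6; m7; m8].

Theorem mainTheorem15 :
  exists (S S' : list (list point)) (M : list marker),
    disjoint_convex_family S /\ disjoint_convex_family S' /\
    ~ same_family S S' /\
    (forall m, In m M -> unit_vector (snd m)) /\
    fully_consistent S M /\ fully_consistent S' M.
Proof.
  exists [A0;A1;A2], [B0;B1;B2], M.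
  split; [|split; [|split; [|split; [|split]]]].
  -
  split.
  { intros P HP; cbn [In] in HP; destruct HP as [HP|[HP|[HP|[]]]]; subst P;
    unfold A0, A1, A2; apply convex3; unfold orient; cbn [fst snd]; lra. }
  { intros P Q HP HQ Hex; cbn [In] in HP, HQ;
    destruct HP as [HP|[HP|[HP|[]]]]; destruct HQ as [HQ|[HQ|[HQ|[]]]]; subst P Q;
    first [ intro pp; tauto
          | exfalso; destruct Hex as [[x y] [H1 H2]]; unfold A0, A1, A2 in *;
            apply in_poly3_inv in H1; apply in_poly3_inv in H2;
            unfold orient in *; cbn [fst snd] in *; lra ]. }
  -
  split.
  { intros P HP; cbn [In] in HP; destruct HP as [HP|[HP|[HP|[]]]]; subst P;
    unfold B0, B1, B2; apply convex3; unfold orient; cbn [fst snd]; lra. }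
  { intros P Q HP HQ Hex; cbn [In] in HP, HQ;
    destruct HP as [HP|[HP|[HP|[]]]]; destruct HQ as [HQ|[HQ|[HQ|[]]]]; subst P Q;
    first [ intro pp; tauto
          | exfalso; destruct Hex as [[x y] [H1 H2]]; unfold B0, B1, B2 in *;
            apply in_poly3_inv in H1; apply in_poly3_inv in H2;
            unfold orient in *; cbn [fst snd] in *; lra ]. }
  - intros [H _]. destruct (H A0 (or_introl eq_refl)) as [Q [HQ Hs]]. cbn [In] in HQ.
    destruct HQ as [HQ|[HQ|[HQ|[]]]]; subst Q.
    + assert (Hw : in_polygon A0 ((60), (150))) by (unfold A0; apply in_poly3; unfold orient; cbn [fst snd]; lra).
      apply Hs in Hw. unfold B0 in Hw. apply in_poly3_inv in Hw. unfold orient in Hw; cbn [fst snd] in Hw; lra.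
    + assert (Hw : in_polygon A0 ((-440), (400))) by (unfold A0; apply in_poly3; unfold orient; cbn [fst snd]; lra).
      apply Hs in Hw. unfold B1 in Hw. apply in_poly3_inv in Hw. unfold orient in Hw; cbn [fst snd] in Hw; lra.
    + assert (Hw : in_polygon A0 ((-440), (400))) by (unfold A0; apply in_poly3; unfold orient; cbn [fst snd]; lra).
      apply Hs in Hw. unfold B2 in Hw. apply in_poly3_inv in Hw. unfold orient in Hw; cbn [fst snd] in Hw; lra.
  - intros m Hm; unfold M in Hm; cbn [In] in Hm.
    repeat (destruct Hm as [Hm|Hm]; [subst m; cbn [snd]; apply unit_normal; cbn [fst snd]; lra|]). destruct Hm.
  -
  split.
  { intros m Hm; unfold M in Hm; cbn [In] in Hm.
    destruct Hm as [Hm|Hm]; [subst m; exists A0, 0%nat; split; [cbn [In]; left; reflexivity | unfold A0, m0; apply aligned3_0; [apply on_seg_intro with (t := (1/2)); cbn [fst snd]; lra | reflexivity]] |].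
    destruct Hm as [Hm|Hm]; [subst m; exists A0, 1%nat; split; [cbn [In]; left; reflexivity | unfold A0, m1; apply aligned3_1; [apply on_seg_intro with (t := (19/20)); cbn [fst snd]; lra | reflexivity]] |].
    destruct Hm as [Hm|Hm]; [subst m; exists A0, 2%nat; split; [cbn [In]; left; reflexivity | unfold A0, m2; apply aligned3_2; [apply on_seg_intro with (t := (4/5)); cbn [fst snd]; lra | reflexivity]] |].
    destruct Hm as [Hm|Hm]; [subst m; exists A1, 0%nat; split; [cbn [In]; right; left; reflexivity | unfold A1, m3; apply aligned3_0; [apply on_seg_intro with (t := (1/2)); cbn [fst snd]; lra | reflexivity]] |].
    destruct Hm as [Hm|Hm]; [subst m; exists A1, 1%nat; split; [cbn [In]; right; left; reflexivity | unfold A1, m4; apply aligned3_1; [apply on_seg_intro with (t := (59/68)); cbn [fst snd]; lra | reflexivity]] |].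
    destruct Hm as [Hm|Hm]; [subst m; exists A1, 2%nat; split; [cbn [In]; right; left; reflexivity | unfold A1, m5; apply aligned3_2; [apply on_seg_intro with (t := (33/38)); cbn [fst snd]; lra | reflexivity]] |].
    destruct Hm as [Hm|Hm]; [subst m; exists A2, 0%nat; split; [cbn [In]; right; right; left; reflexivity | unfold A2, m6; apply aligned3_0; [apply on_seg_intro with (t := (1/2)); cbn [fst snd]; lra | reflexivity]] |].
    destruct Hm as [Hm|Hm]; [subst m; exists A2, 1%nat; split; [cbn [In]; right; right; left; reflexivity | unfold A2, m7; apply aligned3_1; [apply on_seg_intro with (t := (77/80)); cbn [fst snd]; lra | reflexivity]] |].
    destruct Hm as [Hm|Hm]; [subst m; exists A2, 2%nat; split; [cbn [In]; right; right; left; reflexivity | unfold A2, m8; apply aligned3_2; [apply on_seg_intro with (t := (7/8)); cbn [fst snd]; lra | reflexivity]] |].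
    destruct Hm. }
  { intros P i HP Hi; cbn [In] in HP.
    destruct HP as [HP|[HP|[HP|[]]]]; subst P.
    - unfold A0 in Hi; cbn [length] in Hi. destruct i as [|[|[|i]]]; [| | | lia].
      + exists m0; split; [unfold M; cbn [In]; left; reflexivity | unfold A0, m0; apply aligned3_0; [apply on_seg_intro with (t := (1/2)); cbn [fst snd]; lra | reflexivity]].
      + exists m1; split; [unfold M; cbn [In]; right; left; reflexivity | unfold A0, m1; apply aligned3_1; [apply on_seg_intro with (t := (19/20)); cbn [fst snd]; lra | reflexivity]].
      + exists m2; split; [unfold M; cbn [In]; right; right; left; reflexivity | unfold A0, m2; apply aligned3_2; [apply on_seg_intro with (t := (4/5)); cbn [fst snd]; lra | reflexivity]].
    - unfold A1 in Hi; cbn [length] in Hi. destruct i as [|[|[|i]]]; [| | | lia].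
      + exists m3; split; [unfold M; cbn [In]; right; right; right; left; reflexivity | unfold A1, m3; apply aligned3_0; [apply on_seg_intro with (t := (1/2)); cbn [fst snd]; lra | reflexivity]].
      + exists m4; split; [unfold M; cbn [In]; right; right; right; right; left; reflexivity | unfold A1, m4; apply aligned3_1; [apply on_seg_intro with (t := (59/68)); cbn [fst snd]; lra | reflexivity]].
      + exists m5; split; [unfold M; cbn [In]; right; right; right; right; right; left; reflexivity | unfold A1, m5; apply aligned3_2; [apply on_seg_intro with (t := (33/38)); cbn [fst snd]; lra | reflexivity]].
    - unfold A2 in Hi; cbn [length] in Hi. destruct i as [|[|[|i]]]; [| | | lia].
      + exists m6; split; [unfold M; cbn [In]; right; right; right; right; right; right; left; reflexivity | unfold A2, m6; apply aligned3_0; [apply on_seg_intro with (t := (1/2)); cbn [fst snd]; lra | reflexivity]].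
      + exists m7; split; [unfold M; cbn [In]; right; right; right; right; right; right; right; left; reflexivity | unfold A2, m7; apply aligned3_1; [apply on_seg_intro with (t := (77/80)); cbn [fst snd]; lra | reflexivity]].
      + exists m8; split; [unfold M; cbn [In]; right; right; right; right; right; right; right; right; left; reflexivity | unfold A2, m8; apply aligned3_2; [apply on_seg_intro with (t := (7/8)); cbn [fst snd]; lra | reflexivity]].
  }
  -
  split.
  { intros m Hm; unfold M in Hm; cbn [In] in Hm.
    destruct Hm as [Hm|Hm]; [subst m; exists B0, 0%nat; split; [cbn [In]; left; reflexivity | unfold B0, m0; apply aligned3_0; [apply on_seg_intro with (t := (5/28)); cbn [fst snd]; lra | cbn [snd]; symmetry; apply normal_scale with (k := (14/5)); cbn [fst snd]; lra]] |].
    destruct Hm as [Hm|Hm]; [subst m; exists B2, 1%nat; split; [cbn [In]; right; right; left; reflexivity | unfold B2, m1; apply aligned3_1; [apply on_seg_intro with (t := (1/20)); cbn [fst snd]; lra | cbn [snd]; symmetry; apply normal_scale with (k := (1)); cbn [fst snd]; lra]] |].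
    destruct Hm as [Hm|Hm]; [subst m; exists B0, 2%nat; split; [cbn [In]; left; reflexivity | unfold B0, m2; apply aligned3_2; [apply on_seg_intro with (t := (1/2)); cbn [fst snd]; lra | cbn [snd]; symmetry; apply normal_scale with (k := (2/5)); cbn [fst snd]; lra]] |].
    destruct Hm as [Hm|Hm]; [subst m; exists B1, 0%nat; split; [cbn [In]; right; left; reflexivity | unfold B1, m3; apply aligned3_0; [apply on_seg_intro with (t := (1/5)); cbn [fst snd]; lra | cbn [snd]; symmetry; apply normal_scale with (k := (5/2)); cbn [fst snd]; lra]] |].
    destruct Hm as [Hm|Hm]; [subst m; exists B0, 1%nat; split; [cbn [In]; left; reflexivity | unfold B0, m4; apply aligned3_1; [apply on_seg_intro with (t := (9/40)); cbn [fst snd]; lra | cbn [snd]; symmetry; apply normal_scale with (k := (10/17)); cbn [fst snd]; lra]] |].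
    destruct Hm as [Hm|Hm]; [subst m; exists B1, 2%nat; split; [cbn [In]; right; left; reflexivity | unfold B1, m5; apply aligned3_2; [apply on_seg_intro with (t := (1/2)); cbn [fst snd]; lra | cbn [snd]; symmetry; apply normal_scale with (k := (5/19)); cbn [fst snd]; lra]] |].
    destruct Hm as [Hm|Hm]; [subst m; exists B2, 0%nat; split; [cbn [In]; right; right; left; reflexivity | unfold B2, m6; apply aligned3_0; [apply on_seg_intro with (t := (4/27)); cbn [fst snd]; lra | cbn [snd]; symmetry; apply normal_scale with (k := (27/8)); cbn [fst snd]; lra]] |].
    destruct Hm as [Hm|Hm]; [subst m; exists B1, 1%nat; split; [cbn [In]; right; left; reflexivity | unfold B1, m7; apply aligned3_1; [apply on_seg_intro with (t := (3/34)); cbn [fst snd]; lra | cbn [snd]; symmetry; apply normal_scale with (k := (17/40)); cbn [fst snd]; lra]] |].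
    destruct Hm as [Hm|Hm]; [subst m; exists B2, 2%nat; split; [cbn [In]; right; right; left; reflexivity | unfold B2, m8; apply aligned3_2; [apply on_seg_intro with (t := (1/2)); cbn [fst snd]; lra | cbn [snd]; symmetry; apply normal_scale with (k := (1/4)); cbn [fst snd]; lra]] |].
    destruct Hm. }
  { intros P i HP Hi; cbn [In] in HP.
    destruct HP as [HP|[HP|[HP|[]]]]; subst P.
    - unfold B0 in Hi; cbn [length] in Hi. destruct i as [|[|[|i]]]; [| | | lia].
      + exists m0; split; [unfold M; cbn [In]; left; reflexivity | unfold B0, m0; apply aligned3_0; [apply on_seg_intro with (t := (5/28)); cbn [fst snd]; lra | cbn [snd]; symmetry; apply normal_scale with (k := (14/5)); cbn [fst snd]; lra]].
      + exists m4; split; [unfold M; cbn [In]; right; right; right; right; left; reflexivity | unfold B0, m4; apply aligned3_1; [apply on_seg_intro with (t := (9/40)); cbn [fst snd]; lra | cbn [snd]; symmetry; apply normal_scale with (k := (10/17)); cbn [fst snd]; lra]].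
      + exists m2; split; [unfold M; cbn [In]; right; right; left; reflexivity | unfold B0, m2; apply aligned3_2; [apply on_seg_intro with (t := (1/2)); cbn [fst snd]; lra | cbn [snd]; symmetry; apply normal_scale with (k := (2/5)); cbn [fst snd]; lra]].
    - unfold B1 in Hi; cbn [length] in Hi. destruct i as [|[|[|i]]]; [| | | lia].
      + exists m3; split; [unfold M; cbn [In]; right; right; right; left; reflexivity | unfold B1, m3; apply aligned3_0; [apply on_seg_intro with (t := (1/5)); cbn [fst snd]; lra | cbn [snd]; symmetry; apply normal_scale with (k := (5/2)); cbn [fst snd]; lra]].
      + exists m7; split; [unfold M; cbn [In]; right; right; right; right; right; right; right; left; reflexivity | unfold B1, m7; apply aligned3_1; [apply on_seg_intro with (t := (3/34)); cbn [fst snd]; lra | cbn [snd]; symmetry; apply normal_scale with (k := (17/40)); cbn [fst snd]; lra]].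
      + exists m5; split; [unfold M; cbn [In]; right; right; right; right; right; left; reflexivity | unfold B1, m5; apply aligned3_2; [apply on_seg_intro with (t := (1/2)); cbn [fst snd]; lra | cbn [snd]; symmetry; apply normal_scale with (k := (5/19)); cbn [fst snd]; lra]].
    - unfold B2 in Hi; cbn [length] in Hi. destruct i as [|[|[|i]]]; [| | | lia].
      + exists m6; split; [unfold M; cbn [In]; right; right; right; right; right; right; left; reflexivity | unfold B2, m6; apply aligned3_0; [apply on_seg_intro with (t := (4/27)); cbn [fst snd]; lra | cbn [snd]; symmetry; apply normal_scale with (k := (27/8)); cbn [fst snd]; lra]].
      + exists m1; split; [unfold M; cbn [In]; right; left; reflexivity | unfold B2, m1; apply aligned3_1; [apply on_seg_intro with (t := (1/20)); cbn [fst snd]; lra | cbn [snd]; symmetry; apply normal_scale with (k := (1)); cbn [fst snd]; lra]].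
      + exists m8; split; [unfold M; cbn [In]; right; right; right; right; right; right; right; right; left; reflexivity | unfold B2, m8; apply aligned3_2; [apply on_seg_intro with (t := (1/2)); cbn [fst snd]; lra | cbn [snd]; symmetry; apply normal_scale with (k := (1/4)); cbn [fst snd]; lra]].
  }
Qed.
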